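(* Let $n \ge 5$. (a) Let $S, S'$ be sets of transpositions in the symmetric group $S_n$, each generating $S_n$. Then the Cayley graphs $\mathrm{Cay}(S_n,S)$ and $\mathrm{Cay}(S_n,S')$ are isomorphic if and only if the transposition graphs $T(S)$ and $T(S')$ are isomorphic. (b) Let $S$ be a set of transpositions generating $S_n$. Then the Cayley graph $\mathrm{Cay}(S_n,S)$ is edge-transitive if and only if the transposition graph $T(S)$ is edge-transitive.
   Context: For a group $H$ and a subset $S \subseteq H$ with $1 \notin S$ and $S = S^{-1}$, the Cayley graph $\mathrm{Cay}(H,S)$ is the simple undirected graph with vertex set $H$ and edge set $\{\{h, sh\} : h \in H, s \in S\}$. For a set $S$ of transpositions in $S_n$, the transposition graph $T(S)$ is the simple graph with vertex set $\{1,\ldots,n\}$ in which $i$ and $j$ are adjacent if and only if $(i,j) \in S$. A graph $X$ is edge-transitive if for any two edges $\{u,v\},\{x,y\}$ of $X$ there is an automorphism $g$ of $X$ with $\{u^g, v^g\} = \{x,y\}$. *)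

(* Defs.v *)
From mathcomp Require Import all_boot all_fingroup.
Set Implicit Arguments. Unset Strict Implicit. Unset Printing Implicit Defensive.
Local Open Scope group_scope.

Definition is_transposition (n : nat) (t : 'S_n) : bool :=
  [exists i : 'I_n, exists j : 'I_n, (i != j) && (t == tperm i j)].

Definition transposition_set (n : nat) (S : {set 'S_n}) : Prop :=
  forall t, t \in S -> is_transposition t.

Definition generates_Sn (n : nat) (S : {set 'S_n}) : Prop :=
  <<S>> = [set: 'S_n].

Definition cayley_adj (n : nat) (S : {set 'S_n}) : rel 'S_n :=
  fun h k => k * h^-1 \in S.

(* Transposition graph T(S) on vertex set 'I_n (= {1..n} shifted) *)
Definition transp_adj (n : nat) (S : {set 'S_n}) : rel 'I_n :=
  fun i j => (i != j) && (tperm i j \in S).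

Definition graph_iso (T1 T2 : finType) (e1 : rel T1) (e2 : rel T2) : Prop :=
  exists f : T1 -> T2, bijective f /\ forall x y, e2 (f x) (f y) = e1 x y.

Definition edge_transitive (T : finType) (e : rel T) : Prop :=
  forall u v x y, e u v -> e x y ->
    exists g : T -> T, [/\ bijective g, (forall a b, e (g a) (g b) = e a b) &
      ((g u = x /\ g v = y) \/ (g u = y /\ g v = x))].

(* Main.v *)
Require Import Defs.
From mathcomp Require Import all_boot all_fingroup.
Set Implicit Arguments. Unset Strict Implicit. Unset Printing Implicit Defensive.
Local Open Scope group_scope.

Section Basic.
Variable n : nat.
Implicit Types (s t a b c e : 'S_n) (i j p q x y z v : 'I_n).
Notation ts := (@is_transposition n).

Lemma ts_tp t : ts t -> exists i j, i != j /\ t = tperm i j.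
Proof. by case/existsP=> i /existsP [j /andP [ij /eqP ->]]; exists i, j. Qed.

Lemma ts_tperm i j : i != j -> ts (tperm i j).
Proof. by move=> ij; apply/existsP; exists i; apply/existsP; exists j; rewrite ij eqxx. Qed.

Lemma ts_moved t : ts t -> exists i, t i != i.
Proof. by case/ts_tp=> i [j [ij ->]]; exists i; rewrite tpermL eq_sym. Qed.

Lemma ts_self t p : ts t -> t p != p -> t = tperm p (t p).
Proof.
case/ts_tp=> i [j [ij ->]]; case: tpermP => [->|->|]; rewrite ?eqxx //.
by rewrite tpermC.
Qed.

Lemma ts_movedE t p q : ts t -> t p != p -> (t q != q) = (q == p) || (q == t p).
Proof.
move=> Htt tp; have := ts_self Htt tp; set x := t p => ->.
case: tpermP => [->|->|]; rewrite ?eqxx ?orbT //.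
 by rewrite eq_sym.
by move=> qp qx; rewrite (introF eqP qp) (introF eqP qx).
Qed.

Lemma ts_two t x y : ts t -> t x != x -> t y != y -> x != y -> t = tperm x y.
Proof.
move=> Htt tx ty xy; move: ty; rewrite (ts_movedE y Htt tx) [y == x]eq_sym (negPf xy) /=.
by move/eqP=> ->; apply: ts_self.
Qed.

Lemma ts_three c x y z : ts c -> x != y -> x != z -> y != z ->
  c x != x -> c y != y -> c z != z -> False.
Proof.
move=> tc xy xz yz cx cy cz; have e := ts_two tc cx cy xy.
by move: cz; rewrite e tpermD ?eqxx.
Qed.

Lemma ts_invol t p : ts t -> t (t p) = p.
Proof. by case/ts_tp=> i [j [ij ->]]; rewrite tpermK. Qed.

Lemma ts_V t : ts t -> t^-1 = t.
Proof. by case/ts_tp=> i [j [ij ->]]; rewrite tpermV. Qed.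

Lemma ts_mm t : ts t -> t * t = 1.
Proof. by move=> Htt; rewrite -{1}(ts_V Htt) mulVg. Qed.

Lemma tperm_eq2 i j k l : i != j -> tperm i j = tperm k l ->
  (i = k /\ j = l) \/ (i = l /\ j = k).
Proof.
move=> ij e.
have hi : tperm k l i != i by rewrite -e tpermL eq_sym.
have hj : tperm k l j != j by rewrite -e tpermR.
have tk : ts (tperm k l) by rewrite -e; apply: ts_tperm.
have: tperm k l i = j by rewrite -e tpermL.
move: hi hj; case: (tpermP k l i) => [->|->|]; last by rewrite eqxx.
 by move=> _ _ ->; left.
by move=> _ _ ->; right.
Qed.

Definition cutP (S : {set 'S_n}) := forall (C : {set 'I_n}) p q, p \in C -> q \notin C ->
  exists2 s, s \in S & exists2 r, r \in C & s r \notin C.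

Lemma gen_cut S : generates_Sn S -> cutP S.
Proof.
move=> gS C p q pC qC.
suff: [exists s in S, [exists r in C, s r \notin C]].
  by case/exists_inP => s sS /exists_inP [r rC H]; exists s => //; exists r.
apply: contraT => H.
have sub: S \subset 'N(C | 'P).
  apply/subsetP=> s sS; rewrite !inE /=; apply/subsetP => r rC.
  rewrite inE /= apermE; apply: contraT => nC; exfalso; apply: (negP H).
  by apply/exists_inP; exists s => //; apply/exists_inP; exists r.
have: tperm p q \in 'N(C | 'P) by rewrite -gen_subG gS in sub; apply: (subsetP sub); rewrite inE.
move/(astabs_act p); by rewrite /= apermE tpermL pC (negPf qC).
Qed.

Definition meet s t := (s != t) && [exists i, (s i != i) && (t i != i)].
Definition tri (S : {set 'S_n}) a b c :=
  [&& a \in S, b \in S, c \in S, meet a b, meet a c & meet b c].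
Definition common a b c := [exists v, [&& a v != v, b v != v & c v != v]].
Definition oddS (S : {set 'S_n}) a b c :=
  [exists e in S, meet e a (+) meet e b (+) meet e c].

Lemma ex_moved e a p : ts a -> a p != p ->
  [exists i, (e i != i) && (a i != i)] = (e p != p) || (e (a p) != a p).
Proof.
move=> ta ap; apply/existsP/idP.
  by case=> i /andP [ei]; rewrite (ts_movedE i ta ap) => /orP [] /eqP <-; rewrite ei ?orbT.
case/orP=> h; [exists p | exists (a p)]; rewrite h //=.
by rewrite ts_invol // eq_sym.
Qed.

Lemma meet_cross e a v r (C : {set 'I_n}) : ts e -> ts a -> a v != v ->
  r \in C -> e r \notin C -> v \in C -> a v \in C ->
  meet e a = (r == v) || (r == a v).
Proof.
move=> te ta av rC erC vC avC.
have er : e r != r by apply: contraNneq erC => ->.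
rewrite /meet; have -> /= : e != a.
  apply: contraNneq erC => ->; rewrite (ts_self ta av).
  by case: tpermP.  
apply/existsP/idP.
  case=> i /andP []; rewrite (ts_movedE i te er) (ts_movedE i ta av).
  case/orP=> /eqP -> //.
  by case/orP=> /eqP e1; move: erC; rewrite e1 ?vC ?avC.
by move=> h; exists r; rewrite er /= (ts_movedE r ta av).
Qed.

Lemma eq_tp e a p y : ts e -> ts a -> a p != p -> y = a p ->
  (e == a) = (e p != p) && (e y != y).
Proof.
move=> te ta ap ->; have yp : a p != p := ap.
apply/eqP/idP => [->|/andP [h1 h2]].
  by rewrite ap ts_invol // eq_sym.
by rewrite (ts_two te h1 h2) -?(ts_self ta ap) // eq_sym.
Qed.

Lemma common_odd S a b c : transposition_set S -> cutP S -> 4 < n -> tri S a b c ->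
  common a b c = oddS S a b c.
Proof.
move=> tS cS hn /and3P [aS bS /and4P [cS' mab mac mbc]].
have ta := tS _ aS; have tb := tS _ bS; have tc := tS _ cS'.
apply/idP/idP.
  case/existsP => v /and3P [av bv cv].
  set x := a v in av *; set y := b v in bv *; set z := c v in cv *.
  have ea := ts_self ta av; have eb := ts_self tb bv; have ec := ts_self tc cv.
  have xy : x != y by apply: contraTneq mab => e; rewrite /meet ea eb -/x -/y e eqxx.
  have xz : x != z by apply: contraTneq mac => e; rewrite /meet ea ec -/x -/z e eqxx.
  have yz : y != z by apply: contraTneq mbc => e; rewrite /meet eb ec -/y -/z e eqxx.
  pose C := [set v; x; y; z].
  have [q qC] : exists q, q \notin C.
    apply/existsP; rewrite -negb_forall; apply/negP => /forallP h.
    have c4 : #|C| <= 4.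
      have sC : C \subset [:: v; x; y; z].
        by apply/subsetP => i; rewrite !inE -!orbA.
      exact: leq_trans (subset_leq_card sC) (card_size _).
    have : n <= #|C|.
      by rewrite -{1}(card_ord n); apply: subset_leq_card; apply/subsetP => i _; apply: h.
    by move=> h1; have := leq_trans h1 c4; rewrite leqNgt hn.
  have vC : v \in C by rewrite !inE eqxx.
  have [e eS [r rC erC]] := cS C v q vC qC.
  have te := tS _ eS.
  apply/exists_inP; exists e => //.
  have xC : x \in C by rewrite !inE eqxx ?orbT.
  have yC : y \in C by rewrite !inE eqxx ?orbT.
  have zC : z \in C by rewrite !inE eqxx ?orbT.
  rewrite (meet_cross te ta av rC erC vC xC) (meet_cross te tb bv rC erC vC yC).
  rewrite (meet_cross te tc cv rC erC vC zC) -/x -/y -/z.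
  have vx : v != x by rewrite eq_sym.
  have vy : v != y by rewrite eq_sym.
  have vz : v != z by rewrite eq_sym.
  move: rC; rewrite !inE -!orbA => /or4P [] /eqP ->; rewrite !eqxx /=;
  by rewrite ?(negPf vx) ?(negPf vy) ?(negPf vz) ?(negPf xy) ?(negPf xz) ?(negPf yz)
     ?[y == x]eq_sym ?[z == x]eq_sym ?[z == y]eq_sym ?(negPf xy) ?(negPf xz) ?(negPf yz)
     ?[x == v]eq_sym ?[y == v]eq_sym ?[z == v]eq_sym ?(negPf vx) ?(negPf vy) ?(negPf vz).
case/exists_inP=> e eS hx; apply: contraT => nc.
have te := tS _ eS.
case/andP: mab => ab /existsP [p /andP [ap bp]].
have cp : c p == p.
  case: eqP => // /eqP cp; case/negP: nc; apply/existsP; exists p; by rewrite ap bp cp.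
set y := a p in ap *; set z := b p in bp *.
have yz : y != z.
  apply: contraNneq ab => eyz; by rewrite (ts_self ta ap) (ts_self tb bp) -/y -/z eyz.
have cy : c y != y.
  case/andP: mac => _ /existsP [i /andP [ai ci]].
  move: ai; rewrite (ts_movedE i ta ap) => /orP [] /eqP ei;
  by move: ci; rewrite ei ?(eqP cp) ?eqxx.
have cz : c z != z.
  case/andP: mbc => _ /existsP [i /andP [bi ci]].
  move: bi; rewrite (ts_movedE i tb bp) => /orP [] /eqP ei;
  by move: ci; rewrite ei ?(eqP cp) ?eqxx.
have cyz : z = c y.
  by rewrite (ts_two tc cy cz yz) tpermL.
move: hx; rewrite /meet (ex_moved e ta ap) (ex_moved e tb bp) (ex_moved e tc cy) -/y -/z -cyz.
rewrite (eq_tp te ta ap (erefl _)) (eq_tp te tb bp (erefl _)) (eq_tp te tc cy cyz) -/y -/z.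
by case: (e p != p); case: (e y != y); case: (e z != z).
Qed.


Lemma out_seq (s : seq 'I_n) : size s < n -> exists q, q \notin s.
Proof.
move=> hs; apply/existsP; rewrite -negb_forall; apply/negP => /forallP h.
have : #|'I_n| <= #|s| by apply: subset_leq_card; apply/subsetP => i _; apply: h.
by rewrite card_ord => h1; have := leq_trans h1 (card_size s); rewrite leqNgt hs.
Qed.

Lemma uniq_common a b w w' : ts a -> ts b -> a != b -> a w != w -> b w != w ->
  a w' != w' -> b w' != w' -> w = w'.
Proof.
move=> ta tb ab aw bw aw' bw'; apply/eqP; apply: contraNT ab => ww.
by rewrite (ts_two ta aw aw' ww) (ts_two tb bw bw' ww).
Qed.

Section Whitney.
Variables (S S' : {set 'S_n}) (f : 'S_n -> 'S_n).
Hypotheses (tS : transposition_set S) (tS' : transposition_set S')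
  (cS : cutP S) (cS' : cutP S') (hn : 4 < n) (finj : injective f)
  (fS : f @: S = S')
  (fmeet : forall s t, s \in S -> t \in S -> meet (f s) (f t) = meet s t).

Lemma f_in s : s \in S -> f s \in S'.
Proof. by move=> sS; rewrite -fS mem_imset. Qed.

Lemma tri_f a b c : tri S a b c -> tri S' (f a) (f b) (f c).
Proof.
case/and3P=> aS bS /and4P [cS0 mab mac mbc].
by rewrite /tri !f_in // !fmeet // mab mac mbc.
Qed.

Lemma odd_f a b c : a \in S -> b \in S -> c \in S ->
  oddS S a b c = oddS S' (f a) (f b) (f c).
Proof.
move=> aS bS cS0; apply/exists_inP/exists_inP => [[e eS h]|[e' eS' h]].
  by exists (f e); rewrite ?f_in // !fmeet.
move: eS'; rewrite -fS => /imsetP [e eS ee]; exists e => //.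
by move: h; rewrite ee !fmeet.
Qed.

Lemma common_f a b c : tri S a b c -> common a b c = common (f a) (f b) (f c).
Proof.
move=> tr; have tr' := tri_f tr.
case/and3P: (tr) => aS bS /and4P [cS0 _ _ _].
by rewrite (common_odd tS cS hn tr) (common_odd tS' cS' hn tr') odd_f.
Qed.

Lemma lemA a b v : a \in S -> b \in S -> a != b -> a v != v -> b v != v ->
  exists w, forall c, c \in S -> (c v != v) = (f c w != w).
Proof.
move=> aS bS ab av bv.
have mab : meet a b by rewrite /meet ab; apply/existsP; exists v; rewrite av bv.
have ta := tS aS; have tb := tS bS.
have tfa := tS' (f_in aS); have tfb := tS' (f_in bS).
have fab : f a != f b by rewrite (inj_eq finj).
move: (mab); rewrite -fmeet // => /andP [_ /existsP [w /andP [faw fbw]]].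
exists w => c cS0.
have tc := tS cS0; have tfc := tS' (f_in cS0).
case: (eqVneq c a) => [-> | ca]; first by rewrite av faw.
case: (eqVneq c b) => [-> | cb]; first by rewrite bv fbw.
have fca : f c != f a by rewrite (inj_eq finj).
have fcb : f c != f b by rewrite (inj_eq finj).
apply/idP/idP => [cv | fcw].
  have tr : tri S a b c.
    rewrite /tri aS bS cS0 mab /meet eq_sym ca eq_sym cb /=.
    by apply/andP; split; apply/existsP; exists v; rewrite ?av ?bv cv.
  have : common a b c by apply/existsP; exists v; rewrite av bv cv.
  rewrite (common_f tr) => /existsP [w' /and3P [h1 h2 h3]].
  by rewrite (uniq_common tfa tfb fab faw fbw h1 h2).
have tr : tri S a b c.
  rewrite /tri aS bS cS0 mab -(fmeet aS cS0) -(fmeet bS cS0) /meet eq_sym fca eq_sym fcb /=.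
  by apply/andP; split; apply/existsP; exists w; rewrite ?faw ?fbw fcw.
have : common (f a) (f b) (f c) by apply/existsP; exists w; rewrite faw fbw fcw.
rewrite -(common_f tr) => /existsP [v' /and3P [h1 h2 h3]].
by rewrite (uniq_common ta tb ab av bv h1 h2).
Qed.


Lemma vertex_map v : exists w, forall c, c \in S -> (c v != v) = (f c w != w).
Proof.
have [q qv] : exists q, q \notin [:: v] by apply: out_seq; apply: leq_ltn_trans hn.
have qC : q \notin [set v] by move: qv; rewrite !inE.
have [a aS [r rC arC]] := cS (set11 v) qC.
move: rC arC; rewrite !inE => /eqP -> av.
have ta := tS aS.
case: (boolP [exists b in S, (b != a) && (b v != v)]).
  case/exists_inP => b bS /andP [ba bv].
  by apply: (lemA bS aS ba bv av).
move=> nb.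
have uniq_a : forall b, b \in S -> b v != v -> b = a.
  move=> b bS bv; apply/eqP; apply: contraNT nb => ba.
  by apply/exists_inP; exists b => //; rewrite ba bv.
set x := a v in av *.
have xv : x != v := av.
have [q2 q2C] : exists q, q \notin [:: v; x] by apply: out_seq; apply: leq_ltn_trans hn.
have vC : v \in [set v; x] by rewrite !inE eqxx.
have q2C' : q2 \notin [set v; x] by move: q2C; rewrite !inE.
have [e eS [r2 rC erC]] := cS vC q2C'.
have te := tS eS.
have er : e r2 != r2 by apply: contraNneq erC => ->.
have rx : r2 = x.
  move: rC; rewrite !inE => /orP [] /eqP rr //.
  have ev : e v != v by rewrite -rr.
  by move: erC; rewrite rr (uniq_a e eS ev) -/x !inE eqxx orbT.
have ea : e != a.
  apply: contraNneq erC => ->; by rewrite rx /x ts_invol // !inE eqxx.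
have ax : a x != x by rewrite /x ts_invol // eq_sym.
have ex : e x != x by rewrite -rx.
have [w hw] := lemA eS aS ea ex ax.
have tfa := tS' (f_in aS).
have faw : f a w != w by rewrite -hw.
exists (f a w) => c cS0.
case: (eqVneq c a) => [->| ca].
  by rewrite av ts_invol // eq_sym.
have -> : (c v != v) = false.
  by apply/negP => /negP cv; move: ca; rewrite (uniq_a c cS0 cv) eqxx.
apply/esym/negbTE/negP => fcw.
have tc := tS cS0; have tfc := tS' (f_in cS0).
have fca : f c != f a by rewrite (inj_eq finj).
have mfca : meet (f c) (f a).
  rewrite /meet fca; apply/existsP; exists (f a w); rewrite fcw /= ts_invol //.
  by rewrite eq_sym.
move: mfca; rewrite fmeet // => /andP [_ /existsP [i /andP [ci ai]]].
move: ai; rewrite (ts_movedE i ta av) => /orP [] /eqP ei.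
  by move: ci; rewrite ei => cv; move: ca; rewrite (uniq_a c cS0 cv) eqxx.
have fcw' : f c w != w by rewrite -hw // /x -ei.
have := uniq_common tfc tfa fca fcw' faw fcw.
have faw' : f a (f a w) != f a w by rewrite ts_invol // eq_sym.
move=> h; move: faw; rewrite -(h faw') eqxx //.
Qed.


Lemma whitney : exists pi : 'I_n -> 'I_n, injective pi /\
  forall i j, i != j -> tperm i j \in S -> f (tperm i j) = tperm (pi i) (pi j).
Proof.
have ex v : exists w, [forall c in S, (c v != v) == (f c w != w)].
  have [w hw] := vertex_map v; exists w; apply/forall_inP => c cS0.
  by rewrite hw.
pose pi v := xchoose (ex v).
have hpi v : forall c, c \in S -> (c v != v) = (f c (pi v) != pi v).
  move=> c cS0; have /forall_inP h := xchooseP (ex v); by have /eqP := h c cS0.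
have pinj : injective pi.
  move=> v v' e; apply/eqP; apply: contraT => vv.
  have same : forall c, c \in S -> (c v != v) = (c v' != v').
    by move=> c cS0; rewrite hpi // e -hpi.
  have [q qC] : exists q, q \notin [:: v; v'] by apply: out_seq; apply: leq_ltn_trans hn.
  have vC : v \in [set v; v'] by rewrite !inE eqxx.
  have qC' : q \notin [set v; v'] by move: qC; rewrite !inE.
  have [g gS [r rC grC]] := cS vC qC'.
  have tg := tS gS.
  have gr : g r != r by apply: contraNneq grC => ->.
  have [gv gv'] : g v != v /\ g v' != v'.
    move: rC; rewrite !inE => /orP [] /eqP rr; move: gr; rewrite rr => h.
      by split => //; rewrite -same.
    by split => //; rewrite same.
  move: grC; rewrite (ts_two tg gv gv' vv).
  by move: rC; rewrite !inE => /orP [] /eqP ->; rewrite ?tpermL ?tpermR eqxx ?orbT.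
exists pi; split => // i j ij sS.
have ts0 := tS sS; have tf := tS' (f_in sS).
have h1 : f (tperm i j) (pi i) != pi i by rewrite -hpi // tpermL eq_sym.
have h2 : f (tperm i j) (pi j) != pi j by rewrite -hpi // tpermR.
by apply: ts_two => //; rewrite (inj_eq pinj).
Qed.

End Whitney.

Lemma permM3 a s t m : (a * (s * t)) m = t (s (a m)).
Proof. by rewrite !permM. Qed.

Lemma key_disj a s t : ts a -> ts s -> ts t ->
  (forall i, ~~ ((s i != i) && (t i != i))) -> ts (a * (s * t)) -> a = s \/ a = t.
Proof.
move=> ta ts_ tt dj tc.
have tfix m : s m != m -> t m = m by move=> h; move: (dj m); rewrite h /= => /negPn /eqP.
have sfix m : t m != m -> s m = m by move=> h; move: (dj m); rewrite h andbT => /negPn /eqP.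
have [i si] := ts_moved ts_; have [k tk] := ts_moved tt.
set j := s i in si; set l := t k in tk.
have sj : s j != j by rewrite /j ts_invol // eq_sym.
have tl : t l != l by rewrite /l ts_invol // eq_sym.
have es : s = tperm i j := ts_self ts_ si.
have et : t = tperm k l := ts_self tt tk.
case: (boolP ((a i == i) && (a j == j))) => [/andP [/eqP ai /eqP aj]|nA].
  have ci : (a * (s * t)) i != i by rewrite permM3 ai tfix.
  have cj : (a * (s * t)) j != j by rewrite permM3 aj /j ts_invol // tfix // eq_sym.
  have ij : i != j by rewrite eq_sym.
  have e := ts_two tc ci cj ij.
  right; have : a = s * (s * t)^-1 by rewrite {1}es -e mulgK.
  move=> ->; rewrite invMg !ts_V // -{1}(ts_V ts_) -conjgE {1}et tpermJ.
  by rewrite !sfix // -?et.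
case: (boolP ((a k == k) && (a l == l))) => [/andP [/eqP ak /eqP al]|nB].
  have ck : (a * (s * t)) k != k by rewrite permM3 ak sfix.
  have cl : (a * (s * t)) l != l by rewrite permM3 al sfix // /l ts_invol // eq_sym.
  have kl : k != l by rewrite eq_sym.
  have e := ts_two tc ck cl kl.
  left; have : a = t * (s * t)^-1 by rewrite {1}et -e mulgK.
  by move=> ->; rewrite invMg !ts_V // mulgA ts_mm // mul1g.
exfalso.
have [p ap sp] : exists2 p, a p != p & s p != p.
  by move: nA; rewrite negb_and => /orP [] h; [exists i | exists j].
have [q aq tq] : exists2 q, a q != q & t q != q.
  by move: nB; rewrite negb_and => /orP [] h; [exists k | exists l].
have pq : p != q by apply: contraTneq tq => <-; rewrite tfix ?eqxx.
have ea := ts_two ta ap aq pq.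
set p' := s p; set q' := t q.
have sp' : s p' != p' by rewrite /p' ts_invol // eq_sym.
have tq' : t q' != q' by rewrite /q' ts_invol // eq_sym.
have pp' : p != p' by rewrite eq_sym.
have qq' : q != q' by rewrite eq_sym.
have p'q : p' != q by apply: contraTneq tq => <-; rewrite tfix ?eqxx.
have pq' : p != q' by apply: contraTneq tq' => <-; rewrite tfix ?eqxx.
have p'q' : p' != q' by apply: contraTneq tq' => <-; rewrite tfix ?eqxx.
apply: (ts_three tc pp' pq' p'q').
- by rewrite permM3 ea tpermL sfix // eq_sym.
- have qp' : q != p' by rewrite eq_sym.
  rewrite permM3 ea tpermD // /p' ts_invol // tfix //; exact: pp'.
- rewrite permM3 ea tpermD // sfix // /q' ts_invol //; exact: qq'.
Qed.

Lemma key_share a v x y : ts a -> v != x -> v != y -> x != y ->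
  ts (a * (tperm v x * tperm v y)) ->
  [\/ a = tperm v x, a = tperm v y | a = tperm x y].
Proof.
move=> ta vx vy xy tc.
have xv : x != v by rewrite eq_sym.
have yv : y != v by rewrite eq_sym.
have yx : y != x by rewrite eq_sym.
pose L := [:: v; x; y].
have wmove m : m \in L -> (tperm v x * tperm v y) m != m /\ (tperm v x * tperm v y) m \in L.
  rewrite permM /L !inE => /or3P [] /eqP ->.
  - by rewrite tpermL tpermD // eqxx orbT.
  - by rewrite tpermR tpermL eqxx !orbT.
  - by rewrite (@tpermD _ v x y) // tpermR eqxx.
have vL : v \in L by rewrite /L !inE eqxx.
have xL : x \in L by rewrite /L !inE eqxx orbT.
have yL : y \in L by rewrite /L !inE eqxx !orbT.
case: (boolP [&& a v == v, a x == x & a y == y]).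
  case/and3P=> /eqP av /eqP ax /eqP ay; exfalso.
  apply: (ts_three tc vx vy xy); rewrite permM ?av ?ax ?ay.
  - by case: (wmove v vL).
  - by case: (wmove x xL).
  - by case: (wmove y yL).
move=> nA.
have [m0 m0L am0] : exists2 m0, m0 \in L & a m0 != m0.
  by move: nA; rewrite !negb_and => /or3P [] h; [exists v | exists x | exists y].
have [m1 em1] : exists m1, a m0 = m1 by eexists.
have ea := ts_self ta am0; rewrite em1 in ea am0.
case: (boolP (m1 \in L)) => m1L.
  rewrite ea; move: m0L m1L am0; rewrite /L !inE.
  by case/or3P=> /eqP -> /or3P [] /eqP ->; rewrite ?eqxx // => _;
    [ apply: Or31 | apply: Or32 | apply: Or31; rewrite tpermC
    | apply: Or33 | apply: Or32; rewrite tpermC | apply: Or33; rewrite tpermC].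
exfalso.
have H o1 o2 : o1 \in L -> o2 \in L -> o1 != o2 -> o1 != m0 -> o2 != m0 -> False.
  move=> o1L o2L o12 o1m o2m.
  have o1m1 : o1 != m1 by apply: contraNneq m1L => <-.
  have o2m1 : o2 != m1 by apply: contraNneq m1L => <-.
  apply: (ts_three tc o12 o1m1 o2m1); rewrite permM.
  - rewrite ea tpermD; [by case: (wmove o1 o1L)|by rewrite eq_sym|by rewrite eq_sym].
  - rewrite ea tpermD; [by case: (wmove o2 o2L)|by rewrite eq_sym|by rewrite eq_sym].
  - rewrite ea tpermR; case: (wmove m0 m0L) => _ h.
    by apply: contraNneq m1L => <-.
move: m0L; rewrite /L !inE => /or3P [] /eqP e0; rewrite e0 in H.
- by apply: (H x y).
- by apply: (H v y).
- by apply: (H v x).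
Qed.

Lemma comm_disj s t : (forall i, ~~ ((s i != i) && (t i != i))) -> ts s -> ts t ->
  s * t = t * s.
Proof.
move=> dj ts_ tt.
have tfix m : s m != m -> t m = m by move=> h; move: (dj m); rewrite h /= => /negPn /eqP.
have sfix m : t m != m -> s m = m by move=> h; move: (dj m); rewrite h andbT => /negPn /eqP.
apply/permP => m; rewrite !permM.
case: (eqVneq (s m) m) => [sm | sm].
  rewrite sm; case: (eqVneq (t m) m) => [tm | tm]; first by rewrite tm sm.
  by rewrite sfix // ts_invol // eq_sym.
have sm' : s (s m) != s m by rewrite ts_invol // eq_sym.
by rewrite (tfix _ sm') (tfix _ sm).
Qed.

Lemma ust v x y : v != x -> v != y -> x != y ->
  tperm x y * tperm v x * tperm v y = tperm v x.
Proof.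
move=> vx vy xy; apply/permP => m; rewrite !permM.
have xv : x != v by rewrite eq_sym.
have yv : y != v by rewrite eq_sym.
have yx : y != x by rewrite eq_sym.
case: (eqVneq m v) => [->|mv].
  by rewrite (@tpermD _ x y v) // tpermL (@tpermD _ v y x) // tpermL.
case: (eqVneq m x) => [->|mx].
  by rewrite tpermL (@tpermD _ v x y) // tpermR tpermR.
case: (eqVneq m y) => [->|my].
  by rewrite tpermR tpermR tpermL (@tpermD _ v x y).
by rewrite !tpermD // eq_sym.
Qed.

Definition CN (S : {set 'S_n}) s t (y : 'S_n) := cayley_adj S s y && cayley_adj S t y.
Definition Pinv S s t := exists x : 'S_n, [/\ x != 1, CN S s t x & forall y : 'S_n, CN S s t y -> y = 1 \/ y = x].

Lemma Pinv_meet S s t : transposition_set S -> s \in S -> t \in S -> s != t ->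
  Pinv S s t <-> ~~ meet s t.
Proof.
move=> tS sS tS0 st; have ts_ := tS _ sS; have tt := tS _ tS0.
split.
  case=> x [x1 /andP [cxs cxt] uq]; apply/negP => /andP [_ /existsP [v /andP [sv tv]]].
  rewrite /cayley_adj in cxs cxt.
  set x0 := s v in sv; set y0 := t v in tv.
  have es : s = tperm v x0 := ts_self ts_ sv.
  have et : t = tperm v y0 := ts_self tt tv.
  have xy : x0 != y0 by apply: contraNneq st => e; rewrite es et e.
  have vx : v != x0 by rewrite eq_sym.
  have vy : v != y0 by rewrite eq_sym.
  set a := x * s^-1 in cxs.
  have ex : x = a * s by rewrite /a mulgKV.
  have ta := tS _ cxs.
  have tc : ts (a * (tperm v x0 * tperm v y0)).
    by rewrite -es -et mulgA -{1}(ts_V tt) -ex; apply: tS.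
  set u := tperm x0 y0.
  have tst : t * s * t = u.
    have yx : y0 != x0 by rewrite eq_sym.
    by rewrite -{1}(ts_V tt) -mulgA -conjgE {1}es tpermJ -/y0 {1}et (@tpermD _ v y0 x0) // tpermC.
  have uS : u \in S.
    case: (key_share ta vx vy xy tc) => [ea|ea|ea].
    - by case/eqP: x1; rewrite ex ea -es ts_mm.
    - by move: cxt; rewrite ex ea -et (ts_V tt) tst.
    - by rewrite /u -ea.
  have xv : x0 != v by rewrite eq_sym.
  have yv : y0 != v by rewrite eq_sym.
  have uv : u v = v by rewrite /u tpermD.
  have ut : u != t by apply/eqP => e; move: tv; rewrite /y0 -e uv eqxx.
  have us : u != s by apply/eqP => e; move: sv; rewrite /x0 -e uv eqxx.
  have h1 : CN S s t (t * s).
    by rewrite /CN /cayley_adj (ts_V ts_) (ts_V tt) -mulgA ts_mm // mulg1 tst tS0.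
  have h2 : CN S s t (u * s).
    rewrite /CN /cayley_adj (ts_V ts_) (ts_V tt) -mulgA ts_mm // mulg1 uS /=.
    by rewrite /u es et ust // -es.
  case: (uq _ h1) => [e1|e1].
    by case/eqP: st; rewrite -(mulKg t s) e1 mulg1 (ts_V tt).
  case: (uq _ h2) => [e2|e2].
    by case/eqP: us; rewrite -(mulKg u s) e2 mulg1 ts_V // ts_tperm.
  by case/eqP: ut; apply: (mulIg s); rewrite e1 e2.
move=> nm.
have dj : forall i, ~~ ((s i != i) && (t i != i)).
  move=> i; apply/negP => h; case/negP: nm; rewrite /meet st /=.
  by apply/existsP; exists i.
exists (t * s); split.
- by apply: contraNneq st => e; rewrite -(mulKg t s) e mulg1 (ts_V tt).
- by rewrite /CN /cayley_adj (ts_V ts_) (ts_V tt) -mulgA ts_mm // mulg1 tS0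
    -(comm_disj dj) // -mulgA ts_mm // mulg1.
move=> y /andP; rewrite /cayley_adj => [[ys yt]].
set a := y * s^-1 in ys.
have ey : y = a * s by rewrite /a mulgKV.
have tc : ts (a * (s * t)) by rewrite mulgA -{1}(ts_V tt) -ey; apply: tS.
case: (key_disj (tS _ ys) ts_ tt dj tc) => ea.
  by left; rewrite ey ea ts_mm.
by right; rewrite ey ea.
Qed.

Section Cay.
Variables (S S' : {set 'S_n}) (g : 'S_n -> 'S_n).
Hypotheses (gbij : bijective g)
  (gadj : forall a b, cayley_adj S' (g a) (g b) = cayley_adj S a b) (g1 : g 1 = 1).

Lemma cay_img : g @: S = S'.
Proof.
case: gbij => h gK hK.
apply/setP => s'; apply/imsetP/idP => [[s sS ->]|s'S].
  by move: (gadj 1 s); rewrite /cayley_adj g1 !invg1 !mulg1 sS.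
exists (h s'); last by rewrite hK.
by move: (gadj 1 (h s')); rewrite /cayley_adj g1 hK !invg1 !mulg1 s'S.
Qed.

Lemma Pinv_g s t : Pinv S' (g s) (g t) <-> Pinv S s t.
Proof.
case: (gbij) => h gK hK.
have ginj := can_inj gK.
have CNg (y : 'S_n) : CN S' (g s) (g t) (g y) = CN S s t y by rewrite /CN !gadj.
split.
  case=> x' [x1 cx uq]; exists (h x'); split.
  - by apply: contraNneq x1 => e; rewrite -(hK x') e g1.
  - by rewrite -CNg hK.
  - move=> y cy; rewrite -CNg in cy; case: (uq _ cy) => e.
      by left; apply: ginj; rewrite e g1.
    by right; rewrite -e gK.
case=> x [x1 cx uq]; exists (g x); split.
- by rewrite -g1 (inj_eq ginj).
- by rewrite CNg.
- move=> y'; rewrite -(hK y') CNg => /uq [] ->; [left | right] => //.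
Qed.

Lemma g_meet s t : transposition_set S -> transposition_set S' -> s \in S -> t \in S ->
  meet (g s) (g t) = meet s t.
Proof.
move=> tS tS' sS tS0.
have ginj := bij_inj gbij.
case: (eqVneq s t) => [-> | st]; first by rewrite /meet !eqxx.
have gst : g s != g t by rewrite (inj_eq ginj).
have gS : forall u, u \in S -> g u \in S' by move=> u uS; rewrite -cay_img mem_imset.
have e1 := Pinv_meet tS sS tS0 st.
have e2 := Pinv_meet tS' (gS _ sS) (gS _ tS0) gst.
have e3 := Pinv_g s t.
case: (boolP (meet s t)); case: (boolP (meet (g s) (g t))) => // h1 h2.
  by move: (proj1 e1 (proj1 e3 (proj2 e2 h1))); rewrite h2.
by move: (proj1 e2 (proj2 e3 (proj2 e1 h2))); rewrite h1.
Qed.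

End Cay.

Lemma norm_iso S S' g : bijective g ->
  (forall a b, cayley_adj S' (g a) (g b) = cayley_adj S a b) ->
  exists phi : 'S_n -> 'S_n, [/\ bijective phi,
    (forall a b, cayley_adj S' (phi a) (phi b) = cayley_adj S a b), phi 1 = 1 &
    forall z : 'S_n, phi z = g z * (g 1)^-1].
Proof.
case=> h gK hK gadj; exists (fun z : 'S_n => g z * (g 1)^-1); split => //.
- by exists (fun w => h (w * g 1)) => z; rewrite ?mulgKV ?gK // hK mulgK.
- by move=> a b; rewrite -gadj /cayley_adj invMg invgK !mulgA mulgKV.
- by rewrite mulgV.
Qed.

Lemma cay_core (S S' : {set 'S_n}) (phi : 'S_n -> 'S_n) : transposition_set S -> transposition_set S' ->
  generates_Sn S -> generates_Sn S' -> 4 < n -> bijective phi ->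
  (forall a b, cayley_adj S' (phi a) (phi b) = cayley_adj S a b) -> phi 1 = 1 ->
  exists pi : 'I_n -> 'I_n, injective pi /\
  forall i j, i != j -> tperm i j \in S -> phi (tperm i j) = tperm (pi i) (pi j).
Proof.
move=> tS tS' gS gS' hn pb padj p1.
apply: (whitney tS tS' (gen_cut gS) (gen_cut gS') hn (bij_inj pb) (cay_img pb padj p1)).
by move=> s t sS tS0; apply: g_meet.
Qed.

Lemma transp_of (S S' : {set 'S_n}) (f : 'S_n -> 'S_n) (pi : 'I_n -> 'I_n) : transposition_set S -> injective f -> f @: S = S' ->
  injective pi ->
  (forall i j, i != j -> tperm i j \in S -> f (tperm i j) = tperm (pi i) (pi j)) ->
  forall i j, transp_adj S' (pi i) (pi j) = transp_adj S i j.
Proof.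
move=> tS finj fS pinj he i j; rewrite /transp_adj (inj_eq pinj).
case: (eqVneq i j) => //= ij.
apply/idP/idP => [h|h]; last by rewrite -he // -fS mem_imset.
move: h; rewrite -fS => /imsetP [s sS es].
have [a [b [ab eab]]] := ts_tp (tS _ sS).
have pij : pi i != pi j by rewrite (inj_eq pinj).
have sS' : tperm a b \in S by rewrite -eab.
move: es; rewrite eab (he a b ab sS') => /(tperm_eq2 pij) [] [/pinj -> /pinj ->] //.
by rewrite tpermC.
Qed.

Lemma conj_of (S S' : {set 'S_n}) (pi : 'I_n -> 'I_n) (pinj : injective pi) :
  (forall i j, transp_adj S' (pi i) (pi j) = transp_adj S i j) ->
  transposition_set S -> transposition_set S' -> S :^ perm pinj = S'.
Proof.
move=> hT tS tS'; apply/setP => g; rewrite mem_conjg.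
apply/idP/idP => h.
  have [i [j [ij e]]] := ts_tp (tS _ h).
  have -> : g = (tperm i j) ^ perm pinj by rewrite -e conjgKV.
  rewrite tpermJ !permE.
  have pij : pi i != pi j by rewrite (inj_eq pinj).
  by move: (hT i j); rewrite /transp_adj pij ij -e h /= => ->.
have [a [b [ab e]]] := ts_tp (tS' _ h).
have [q piK qK] := injF_bij pinj.
have := hT (q a) (q b); rewrite /transp_adj !qK ab -e h /= => /esym /andP [_ hs].
rewrite e tpermJ; have -> : (perm pinj)^-1 a = q a.
  by apply: (@perm_inj _ (perm pinj)); rewrite permKV permE qK.
have -> : (perm pinj)^-1 b = q b.
  by apply: (@perm_inj _ (perm pinj)); rewrite permKV permE qK.
exact: hs.
Qed.
End Basic.

Theorem theorem1 (n : nat) (hn : 5 <= n) :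
  (forall S S' : {set 'S_n},
     transposition_set S -> generates_Sn S ->
     transposition_set S' -> generates_Sn S' ->
     (graph_iso (cayley_adj S) (cayley_adj S') <->
      graph_iso (transp_adj S) (transp_adj S'))) /\
  (forall S : {set 'S_n},
     transposition_set S -> generates_Sn S ->
     (edge_transitive (cayley_adj S) <-> edge_transitive (transp_adj S))).
Proof.
have hn' : 4 < n := hn.
split.
  move=> S S' tS gS tS' gS'; split.
    case=> g [gb gadj]; have [phi [pb padj p1 _]] := norm_iso gb gadj.
    have [pi [pinj he]] := cay_core tS tS' gS gS' hn' pb padj p1.
    exists pi; split; first exact: injF_bij.
    exact: transp_of tS (bij_inj pb) (cay_img pb padj p1) pinj he.
  case=> pi [pb hT]; have pinj := bij_inj pb.
  have eS := conj_of pinj hT tS tS'.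
  exists (fun x => x ^ perm pinj); split.
    by exists (fun x => x ^ (perm pinj)^-1) => x; rewrite ?conjgK ?conjgKV.
  by move=> a b; rewrite /cayley_adj -conjVg -conjMg -eS memJ_conjg.
move=> S tS gS; split.
  move=> ET u v x y huv hxy.
  have uv : u != v by case/andP: huv.
  have c1 : cayley_adj S 1 (tperm u v) by rewrite /cayley_adj invg1 mulg1; case/andP: huv.
  have c2 : cayley_adj S 1 (tperm x y) by rewrite /cayley_adj invg1 mulg1; case/andP: hxy.
  have [g [gb gadj hg]] := ET _ _ _ _ c1 c2.
  have [phi [pb padj p1 pE]] := norm_iso gb gadj.
  have ps : phi (tperm u v) = tperm x y.
    by rewrite pE; case: hg => [[-> ->]|[-> ->]]; rewrite ?invg1 ?mulg1 ?mul1g ?tpermV.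
  have [pi [pinj he]] := cay_core tS tS gS gS hn' pb padj p1.
  exists pi; split.
  - exact: injF_bij.
  - exact: transp_of tS (bij_inj pb) (cay_img pb padj p1) pinj he.
  - have puv : pi u != pi v by rewrite (inj_eq pinj).
    by move: ps; rewrite he //; [move/(tperm_eq2 puv) | case/andP: huv].
move=> ET u v x y huv hxy.
have [i [j [ij es]]] := ts_tp (tS _ huv).
have [k [l [kl es']]] := ts_tp (tS _ hxy).
have tij : transp_adj S i j by rewrite /transp_adj ij -es; exact: huv.
have tkl : transp_adj S k l by rewrite /transp_adj kl -es'; exact: hxy.
have [pi [pb hT hpi]] := ET _ _ _ _ tij tkl.
have pinj := bij_inj pb.
have eS := conj_of pinj hT tS tS.
have mJ z : (z ^ perm pinj \in S) = (z \in S) by rewrite -{1}eS memJ_conjg.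
have hsg : tperm i j ^ perm pinj = tperm k l.
  by rewrite tpermJ !permE; case: hpi => [[-> ->]|[-> ->]] //; rewrite tpermC.
exists (fun z => (z * u^-1) ^ perm pinj * x); split.
- exists (fun w => (w * x^-1) ^ (perm pinj)^-1 * u) => z.
    by rewrite mulgK conjgK mulgKV.
  by rewrite mulgK conjgKV mulgKV.
- move=> a b; rewrite /cayley_adj invMg mulgA mulgK -conjVg -conjMg mJ.
  by rewrite invMg invgK mulgA mulgKV.
- left; split; first by rewrite mulgV conj1g mul1g.
  by rewrite es hsg -es' mulgKV.
Qed.
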